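(* Consider the system \[ \begin{aligned} \dot X_1^1&=\bigl(\mu_1(S_1^{in}-k_1X_1^1)-D_1\bigr)X_1^1,\\ \dot X_2^1&=\bigl(\mu_2(S_2^{in}+k_2X_1^1-k_3X_2^1)-D_1\bigr)X_2^1,\\ \dot X_1^2&=D_2(X_1^1-X_1^2)+\mu_1(S_1^{in}-k_1X_1^2)X_1^2,\\ \dot X_2^2&=D_2(X_2^1-X_2^2)+\mu_2(S_2^{in}+k_2X_1^2-k_3X_2^2)X_2^2, \end{aligned} \] on $M=\{(X_1^1,X_2^1,X_1^2,X_2^2)\in\mathbb R_+^4: X_1^i\le S_1^{in}/k_1,\ X_2^i\le (S_2^{in}+k_2X_1^i)/k_3,\ i=1,2\}$, where $\mu_1,\mu_2$ satisfy (H1) and (H2). Then its nonnegative steady states are of the following nine types, with the indicated components (for $i=1,2$), and a steady state of each type exists (with nonnegative components) if and only if the indicated condition holds: \begin{itemize} \item $\mathcal E_{00}^{00}=(0,0,0,0)$: always exists. \item $\mathcal E_{00}^{0i}=\bigl(0,0,0,(S_2^{in}-\lambda_2^{2i})/k_3\bigr)$: exists iff $S_2^{in}>\lambda_2^{2i}$. \item $\mathcal E_{00}^{10}=\bigl(0,0,(S_1^{in}-\lambda_1^2)/k_1,0\bigr)$: exists iff $S_1^{in}>\lambda_1^2$. \item $\mathcal E_{00}^{1i}=\bigl(0,0,(S_1^{in}-\lambda_1^2)/k_1,\ k_2(S_1^{in}-F_{2i})/(k_1k_3)\bigr)$: exists iff $S_1^{in}>\max(\lambda_1^2,F_{2i})$.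 \item $\mathcal E_{10}^{10}=\bigl((S_1^{in}-\lambda_1^1)/k_1,0,X_1^{2*},0\bigr)$, where $X_1^{2*}$ is the unique solution of $f_1(x)=g_1(x)$ (with $X_1^{1*}=(S_1^{in}-\lambda_1^1)/k_1$): exists iff $S_1^{in}>\lambda_1^1$. \item $\mathcal E_{10}^{1i}=\bigl((S_1^{in}-\lambda_1^1)/k_1,0,X_1^{2*},\phi_i/k_3\bigr)$, with $X_1^{2*}$ as in the previous item: exists iff $S_1^{in}>\lambda_1^1$ and $\phi_i>0$. \item $\mathcal E_{0i}^{01}=\bigl(0,(S_2^{in}-\lambda_2^{1i})/k_3,0,X_2^{2*}\bigr)$, where $X_2^{2*}$ is a solution of $f_2(x)=g_2(x)$ with $X_2^{1*}=(S_2^{in}-\lambda_2^{1i})/k_3$: exists iff $S_2^{in}>\lambda_2^{1i}$. \item $\mathcal E_{0i}^{11}=\bigl(0,(S_2^{in}-\lambda_2^{1i})/k_3,(S_1^{in}-\lambda_1^2)/k_1,X_2^{2*}\bigr)$, where $X_2^{2*}$ is a solution of $f_3(x)=g_2(x)$ with $X_2^{1*}=(S_2^{in}-\lambda_2^{1i})/k_3$ and $X_1^{2*}=(S_1^{in}-\lambda_1^2)/k_1$: exists iff $S_1^{in}>\lambda_1^2$ and $S_2^{in}>\lambda_2^{1i}$. \item $\mathcal E_{1i}^{11}=\bigl((S_1^{in}-\lambda_1^1)/k_1,\ k_2(S_1^{in}-F_{1i})/(k_1k_3),\ X_1^{2*},X_2^{2*}\bigr)$, where $X_1^{2*}$ is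 the unique solution of $f_1(x)=g_1(x)$ (with $X_1^{1*}=(S_1^{in}-\lambda_1^1)/k_1$) and $X_2^{2*}$ is a solution of $f_3(x)=g_2(x)$ (with $X_2^{1*}=k_2(S_1^{in}-F_{1i})/(k_1k_3)$): exists iff $S_1^{in}>\max(\lambda_1^1,F_{1i})$. \end{itemize}
   Context: Parameters: $k_1,k_2,k_3>0$ (pseudo-stoichiometric coefficients), $D>0$, $r\in(0,1)$, $r_1=r$, $r_2=1-r$, $D_1=D/r_1$, $D_2=D/r_2$, $S_1^{in},S_2^{in}\ge0$. The functions $\mu_1,\mu_2\in C^1(\mathbb R_+)$ satisfy (H1): $\mu_1(0)=0$, $\lim_{s\to\infty}\mu_1(s)=m_1$, $\mu_1'(s)>0$ for all $s>0$; and (H2): $\mu_2(0)=0$, $\lim_{s\to\infty}\mu_2(s)=0$, and there is $S_2^m>0$ with $\mu_2'>0$ on $(0,S_2^m)$ and $\mu_2'<0$ on $(S_2^m,\infty)$. Let $D_i^m=r_i\mu_2(S_2^m)$. For $i=1,2$: $\lambda_1^i=\lambda_1^i(D,r)$ is the unique solution of $\mu_1(S)=D_i$ when $D<r_im_1$, and $\lambda_1^i=+\infty$ otherwise; $\lambda_2^{i1}\le\lambda_2^{i2}$ are the solutions of $\mu_2(S)=D_i$ when $D\le D_i^m$, and $\lambda_2^{ij}=+\infty$ otherwise. $F_{ij}=\lambda_1^i+\frac{k_1}{k_2}(\lambda_2^{ij}-S_2^{in})$. $\phi_j=S_2^{in}+k_2X_1^{2*}-\lambda_2^{2j}$, where $X_1^{2*}$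 is the unique solution of $f_1(x)=g_1(x)$ with $X_1^{1*}=(S_1^{in}-\lambda_1^1)/k_1$ (defined for $0<D\le D_2^m$, $S_1^{in}>\lambda_1^1$). Auxiliary functions (where $X_1^{1*},X_2^{1*},X_1^{2*}$ denote the indicated components of the steady state under consideration): $g_1(x)=D_2(x-X_1^{1*})/x$, $g_2(x)=D_2(x-X_2^{1*})/x$ on $(0,\infty)$; $f_1(x)=\mu_1(S_1^{in}-k_1x)$ on $[0,S_1^{in}/k_1]$; $f_2(x)=\mu_2(S_2^{in}-k_3x)$ on $[0,S_2^{in}/k_3]$; $f_3(x)=\mu_2(S_2^{in}+k_2X_1^{2*}-k_3x)$ on $[0,(S_2^{in}+k_2X_1^{2*})/k_3]$. Notation $\mathcal E_{ab}^{cd}$: the subscript refers to $(X_1^1,X_2^1)$ and the superscript to $(X_1^2,X_2^2)$; $0$ means the component vanishes, a nonzero index means it is positive (the index $i\in\{1,2\}$ distinguishing the two possible branches). *)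

(* Defs.v *)
(* R : realType, extended reals \bar R for the
   possibly infinite break-even concentrations lambda. *)
From HB Require Import structures.
From mathcomp Require Import all_boot all_order all_algebra.
From mathcomp Require Import all_classical all_reals all_analysis.
Set Implicit Arguments. Unset Strict Implicit. Unset Printing Implicit Defensive.
Import Order.TTheory GRing.Theory Num.Theory.
Import numFieldNormedType.Exports.
Local Open Scope classical_set_scope.
Local Open Scope ring_scope.

Record model (R : realType) := Model {
  k1 : R; k2 : R; k3 : R;      (* pseudo-stoichiometric coefficients *)
  D : R; r : R;                (* dilution rate and volume fraction *)
  S1in : R; S2in : R;
  mu1 : R -> R; mu2 : R -> R;
  m1 : R;
  S2m : R
}.

Inductive br := b1 | b2.

Section Defs.
Variables (R : realType) (p : model R).

Definition C1_Rplus_with_deriv (f f' : R -> R) : Prop :=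
  (forall s : R, 0 <= s ->
     (fun h : R => h^-1 * (f (s + h) - f s))
       @ within [set h : R | h != 0 /\ 0 <= s + h] (nbhs (0:R)) --> f' s)
  /\ {within `[0, +oo[, continuous f'}.

Definition H1 (dmu1 : R -> R) : Prop :=
  C1_Rplus_with_deriv (mu1 p) dmu1 /\
  mu1 p 0 = 0 /\ mu1 p x @[x --> +oo] --> m1 p /\
  (forall s, 0 < s -> 0 < dmu1 s).

Definition H2 (dmu2 : R -> R) : Prop :=
  C1_Rplus_with_deriv (mu2 p) dmu2 /\
  mu2 p 0 = 0 /\ mu2 p x @[x --> +oo] --> 0 /\
  0 < S2m p /\
  (forall s, 0 < s < S2m p -> 0 < dmu2 s) /\
  (forall s, S2m p < s -> dmu2 s < 0).

Definition rr (i : br) : R := if i is b1 then r p else 1 - r p.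
Definition Dd (i : br) : R := D p / rr i.
Definition Dm (i : br) : R := rr i * mu2 p (S2m p).

Definition lambda1 (i : br) : \bar R :=
  if D p < rr i * m1 p
  then (xget 0 [set S | 0 <= S /\ mu1 p S = Dd i])%:E
  else +oo%E.

Definition lambda2 (i j : br) : \bar R :=
  if D p <= Dm i then
    (if j is b1 then
       xget 0 [set S | 0 <= S /\ mu2 p S = Dd i /\
                       forall T, 0 <= T -> mu2 p T = Dd i -> S <= T]
     else
       xget 0 [set S | 0 <= S /\ mu2 p S = Dd i /\
                       forall T, 0 <= T -> mu2 p T = Dd i -> T <= S])%:E
  else +oo%E.

Definition F (i j : br) : \bar R :=
  (lambda1 i + (k1 p / k2 p)%:E * (lambda2 i j - (S2in p)%:E))%E.

(* X_1^{1*} = (S1in - lambda_1^1)/k1 (meaningful when S1in > lambda_1^1) *)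
Definition X11star : R := (S1in p - fine (lambda1 b1)) / k1 p.

(* X_1^{2*}: the unique solution of f1(x) = g1(x),
   x in the common domain ]0, S1in/k1] *)
Definition X12star : R :=
  xget 0 [set x | 0 < x <= S1in p / k1 p /\
                  mu1 p (S1in p - k1 p * x) = Dd b2 * (x - X11star) / x].

Definition phi (j : br) : \bar R :=
  ((S2in p + k2 p * X12star)%:E - lambda2 b2 j)%E.

(* The invariant set M; a state is (X_1^1, X_2^1, X_1^2, X_2^2). *)
Definition inM (x1 x2 x3 x4 : R) : Prop :=
  0 <= x1 <= S1in p / k1 p /\ 0 <= x3 <= S1in p / k1 p /\
  0 <= x2 <= (S2in p + k2 p * x1) / k3 p /\
  0 <= x4 <= (S2in p + k2 p * x3) / k3 p.

Definition steady (x1 x2 x3 x4 : R) : Prop :=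
  inM x1 x2 x3 x4 /\
  (mu1 p (S1in p - k1 p * x1) - Dd b1) * x1 = 0 /\
  (mu2 p (S2in p + k2 p * x1 - k3 p * x2) - Dd b1) * x2 = 0 /\
  Dd b2 * (x1 - x3) + mu1 p (S1in p - k1 p * x3) * x3 = 0 /\
  Dd b2 * (x2 - x4) + mu2 p (S2in p + k2 p * x3 - k3 p * x4) * x4 = 0.

(* The nine types E_{ab}^{cd} (subscript: (X_1^1,X_2^1),
   superscript: (X_1^2,X_2^2)). *)
Inductive sstype :=
| E00_00 | E00_0 of br | E00_10 | E00_1 of br
| E10_10 | E10_1 of br | E0_01 of br | E0_11 of br | E1_11 of br.

Definition is_type (t : sstype) (x1 x2 x3 x4 : R) : Prop :=
  match t with
  | E00_00 => x1 = 0 /\ x2 = 0 /\ x3 = 0 /\ x4 = 0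
  | E00_0 i => x1 = 0 /\ x2 = 0 /\ x3 = 0 /\ 0 < x4 /\
      x4%:E = (((S2in p)%:E - lambda2 b2 i) * (k3 p)^-1%:E)%E
  | E00_10 => x1 = 0 /\ x2 = 0 /\ 0 < x3 /\ x4 = 0 /\
      x3%:E = (((S1in p)%:E - lambda1 b2) * (k1 p)^-1%:E)%E
  | E00_1 i => x1 = 0 /\ x2 = 0 /\ 0 < x3 /\ 0 < x4 /\
      x3%:E = (((S1in p)%:E - lambda1 b2) * (k1 p)^-1%:E)%E /\
      x4%:E = ((k2 p / (k1 p * k3 p))%:E * ((S1in p)%:E - F b2 i))%E
  | E10_10 => 0 < x1 /\ x2 = 0 /\ 0 < x3 /\ x4 = 0 /\
      x1%:E = (((S1in p)%:E - lambda1 b1) * (k1 p)^-1%:E)%E /\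
      x3 = X12star
  | E10_1 i => 0 < x1 /\ x2 = 0 /\ 0 < x3 /\ 0 < x4 /\
      x1%:E = (((S1in p)%:E - lambda1 b1) * (k1 p)^-1%:E)%E /\
      x3 = X12star /\
      x4%:E = (phi i * (k3 p)^-1%:E)%E
  | E0_01 i => x1 = 0 /\ 0 < x2 /\ x3 = 0 /\ 0 < x4 /\
      x2%:E = (((S2in p)%:E - lambda2 b1 i) * (k3 p)^-1%:E)%E /\
      (* x4 solves f2(x) = g2(x) with X_2^{1*} = x2 *)
      x4 <= S2in p / k3 p /\
      mu2 p (S2in p - k3 p * x4) = Dd b2 * (x4 - x2) / x4
  | E0_11 i => x1 = 0 /\ 0 < x2 /\ 0 < x3 /\ 0 < x4 /\
      x2%:E = (((S2in p)%:E - lambda2 b1 i) * (k3 p)^-1%:E)%E /\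
      x3%:E = (((S1in p)%:E - lambda1 b2) * (k1 p)^-1%:E)%E /\
      (* x4 solves f3(x) = g2(x) with X_2^{1*} = x2, X_1^{2*} = x3 *)
      x4 <= (S2in p + k2 p * x3) / k3 p /\
      mu2 p (S2in p + k2 p * x3 - k3 p * x4) = Dd b2 * (x4 - x2) / x4
  | E1_11 i => 0 < x1 /\ 0 < x2 /\ 0 < x3 /\ 0 < x4 /\
      x1%:E = (((S1in p)%:E - lambda1 b1) * (k1 p)^-1%:E)%E /\
      x2%:E = ((k2 p / (k1 p * k3 p))%:E * ((S1in p)%:E - F b1 i))%E /\
      x3 = X12star /\
      (* x4 solves f3(x) = g2(x) with X_2^{1*} = x2, X_1^{2*} = x3 *)
      x4 <= (S2in p + k2 p * x3) / k3 p /\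
      mu2 p (S2in p + k2 p * x3 - k3 p * x4) = Dd b2 * (x4 - x2) / x4
  end.

Definition cond (t : sstype) : Prop :=
  match t with
  | E00_00 => True
  | E00_0 i => ((S2in p)%:E > lambda2 b2 i)%E
  | E00_10 => ((S1in p)%:E > lambda1 b2)%E
  | E00_1 i => ((S1in p)%:E > Order.max (lambda1 b2) (F b2 i))%E
  | E10_10 => ((S1in p)%:E > lambda1 b1)%E
  | E10_1 i => ((S1in p)%:E > lambda1 b1)%E /\ (phi i > 0)%E
  | E0_01 i => ((S2in p)%:E > lambda2 b1 i)%E
  | E0_11 i => ((S1in p)%:E > lambda1 b2)%E /\ ((S2in p)%:E > lambda2 b1 i)%E
  | E1_11 i => ((S1in p)%:E > Order.max (lambda1 b1) (F b1 i))%E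
  end.

End Defs.

(* Main.v *)
Require Import Defs.
From HB Require Import structures.
From mathcomp Require Import all_boot all_order all_algebra.
From mathcomp Require Import all_classical all_reals all_analysis.
From mathcomp Require Import lra ring.
Import Order.TTheory GRing.Theory Num.Theory.
Import numFieldNormedType.Exports.
Local Open Scope classical_set_scope.
Local Open Scope ring_scope.

Section Gen.
Variable R : realType.
Implicit Types f df : R -> R.

Lemma locbound f df : C1_Rplus_with_deriv f df -> forall s, 0 <= s ->
  exists2 d, 0 < d & forall t, 0 <= t -> `|t - s| < d ->
    `|f t - f s| <= (`|df s| + 1) * `|t - s|.
Proof.
move=> [Hl _] s s0.
have := Hl s s0; move/cvgrPdist_lt/(_ 1 ltr01).
rewrite near_withinE => /nbhs_ballP [d d0 Hd].
exists d => // t t0 ts.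
have [->|tns] := eqVneq t s; first by rewrite !subrr normr0 mulr0.
have hne : t - s != 0 by rewrite subr_eq0.
have := Hd (t - s).
rewrite /ball /= sub0r normrN => /(_ ts).
rewrite addrCA subrr addr0 => /(_ (conj hne t0)) H.
set q := (t - s)^-1 * (f t - f s) in H.
have -> : f t - f s = q * (t - s) by rewrite /q mulrAC mulVf // mul1r.
rewrite normrM ler_wpM2r //.
have : `|q| <= `|df s| + `|df s - q|.
  rewrite [X in `|X| <= _](_ : q = df s - (df s - q)); last by rewrite opprB addrC subrK.
  exact: ler_normB.
move=> h; apply: (le_trans h); rewrite lerD2l; exact: ltW.
Qed.
Lemma maxlip (t x : R) : `|Num.max t 0 - Num.max x 0| <= `|t - x|.
Proof.
have h1 : t - x <= `|t - x| by apply: ler_norm.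
have h2 : x - t <= `|t - x| by rewrite distrC; apply: ler_norm.
rewrite ler_norml; case: (lerP 0 t) => ht; case: (lerP 0 x) => hx;
  rewrite ?(max_l ht) ?(max_l hx) ?(max_r (ltW ht)) ?(max_r (ltW hx));
  apply/andP; split; lra.
Qed.

Lemma fe_cont f df : C1_Rplus_with_deriv f df ->
  continuous (fun x : R => f (Num.max x 0)).
Proof.
move=> H x; apply/cvgrPdist_lt => e e0.
have s0 : 0 <= Num.max x 0 by rewrite le_max lexx orbT.
have [d d0 Hd] := @locbound f df H _ s0.
set K := `|df (Num.max x 0)| + 1.
have K0 : 0 < K by rewrite /K; apply: (lt_le_trans ltr01); rewrite lerDr.
apply/nbhs_ballP; exists (Num.min d (e / K)) => /=.
  by rewrite lt_min d0 divr_gt0.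
move=> t; rewrite /ball /= lt_min => /andP [hd he].
have t0 : 0 <= Num.max t 0 by rewrite le_max lexx orbT.
have hm := maxlip t x.
rewrite distrC; apply: le_lt_trans (Hd _ t0 _) _.
  by apply: le_lt_trans hm _; rewrite distrC.
apply: (le_lt_trans (y := K * `|x - t|)).
  by rewrite -/K ler_wpM2l ?(ltW K0) // (distrC x).
by rewrite mulrC -ltr_pdivlMr.
Qed.
Lemma isder f df (s : R) : C1_Rplus_with_deriv f df -> 0 < s ->
  is_derive s 1 f (df s).
Proof.
move=> [Hl _] s0.
have H := Hl s (ltW s0).
set g := fun h : R => h^-1 * (f (s + h) - f s).
have H2 : (fun h : R => h^-1 *: ((f \o shift s) (h *: 1) - f s)) @ 0^' --> df s.
  have -> : (fun h : R => h^-1 *: ((f \o shift s) (h *: 1) - f s)) = g.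
    by apply/funext => h; rewrite /g /= -[h%:A]/(h * 1) mulr1 (addrC h s).
  apply: cvg_trans H; apply: cvg_app => P /=; rewrite /within => HP.
  have Hs : \forall h \near (0:R), `|h| < s.
    apply/nbhs_ballP; exists s => // h; rewrite /ball /= sub0r normrN.
    done.
  apply: filterS2 Hs HP => h hs hB hn0; apply: hB; split => //.
  move: hs; rewrite ltr_norml => /andP [h1 h2]; lra.
apply: DeriveDef; [exact: cvgP H2 | exact: cvg_lim H2].
Qed.
Lemma lt0x (x a b : R) : x \in `]a, b[ -> 0 <= a -> 0 < x.
Proof. rewrite in_itv /= => /andP [h1 _] h; exact: le_lt_trans h1. Qed.

Lemma mvt_pos f df (a b : R) : C1_Rplus_with_deriv f df -> 0 <= a -> a < b ->
  exists2 c, a < c < b & f b - f a = df c * (b - a).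
Proof.
move=> H a0 ab.
have Hc : {within `[a,b], continuous f}.
  have HH : {within `[a,b], continuous (fun x : R => f (Num.max x 0))}.
    apply: continuous_subspaceT; exact: (@fe_cont f df H).
  apply: subspace_eq_continuous HH.
  move=> x; rewrite inE /= in_itv /= => /andP [hx _].
  by rewrite /from_subspace max_l //; apply: le_trans hx.
have [c cab E] := MVT ab (fun x hx => @isder f df x H (@lt0x x a b hx a0)) Hc.
by exists c => //; move: cab; rewrite in_itv.
Qed.

Lemma incr f df (a b : R) : C1_Rplus_with_deriv f df -> 0 <= a -> a < b ->
  (forall x, a < x < b -> 0 < df x) -> f a < f b.
Proof.
move=> H a0 ab Hd; have [c cab E] := @mvt_pos f df a b H a0 ab.
rewrite -subr_gt0 E; have := Hd c cab; move: ab; clear; move=> ab h; nra.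
Qed.

Lemma decr f df (a b : R) : C1_Rplus_with_deriv f df -> 0 <= a -> a < b ->
  (forall x, a < x < b -> df x < 0) -> f b < f a.
Proof.
move=> H a0 ab Hd; have [c cab E] := @mvt_pos f df a b H a0 ab.
rewrite -subr_lt0 E; have := Hd c cab; move: ab; clear; move=> ab h; nra.
Qed.
Lemma ivt_gen (g : R -> R) (a b v : R) : continuous g -> a <= b ->
  (g a <= v <= g b \/ g b <= v <= g a) -> exists c, a <= c <= b /\ g c = v.
Proof.
move=> gc ab hv.
have gcw : {within `[a, b], continuous g} by apply: continuous_subspaceT.
have hv' : Num.min (g a) (g b) <= v <= Num.max (g a) (g b).
  case: hv => /andP [h1 h2]; apply/andP; split;
    rewrite ?ge_min ?le_max ?h1 ?h2 ?orbT //.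
have [c cab gcv] := IVT ab gcw hv'.
by exists c; split => //; move: cab; rewrite in_itv.
Qed.
Lemma cont_aff (h : R -> R) (a b c d : R) : continuous h ->
  continuous (fun x : R => x * h (a - b * x) - c * (x - d)).
Proof.
move=> hc x.
have ha : {for x, continuous (fun x : R => a - b * x)}.
  by apply: cvgB; [exact: cvg_cst | apply: cvgM; [exact: cvg_cst | exact: cvg_id]].
have hh : {for x, continuous (h \o (fun x : R => a - b * x))}.
  exact: (continuous_comp ha (hc _)).
apply: cvgB; first by apply: cvgM; [exact: cvg_id | exact: hh].
apply: cvgM; first exact: cvg_cst.
by apply: cvgB; [exact: cvg_id | exact: cvg_cst].
Qed.

Lemma g_strict (Dv X x y : R) : 0 < Dv -> 0 < X -> 0 < x -> x < y ->
  Dv * (x - X) / x < Dv * (y - X) / y.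
Proof.
move=> hD hX hx xy.
have hy : 0 < y by apply: lt_trans xy.
rewrite ltr_pdivrMr // mulrAC ltr_pdivlMr //.
have hyx : 0 < y - x by rewrite subr_gt0.
have := mulr_gt0 (mulr_gt0 hD hX) hyx.
nra.
Qed.

Lemma root_aff (mu : R -> R) (a b Dv X : R) :
  continuous (fun x : R => mu (Num.max x 0)) -> 0 < b -> 0 < X -> X < a / b ->
  0 < Dv -> 0 < mu (a - b * X) -> mu 0 = 0 ->
  exists c, X < c <= a / b /\ mu (a - b * c) = Dv * (c - X) / c.
Proof.
move=> fc hb hX Xt hDv hmX mu0.
have hXa : 0 < a - b * X.
  by rewrite subr_gt0 mulrC -ltr_pdivlMr.
have gX : 0 <= X * mu (Num.max (a - b * X) 0) - Dv * (X - X).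
  rewrite subrr mulr0 subr0 max_l; last exact: ltW.
  by apply: mulr_ge0; apply: ltW.
have e0 : a - b * (a / b) = 0 by rewrite [b * (a / b)]mulrC divfK ?gt_eqF // subrr.
have gt : a / b * mu (Num.max (a - b * (a / b)) 0) - Dv * (a / b - X) <= 0.
  rewrite e0 max_l // mu0 mulr0 sub0r oppr_le0; apply: mulr_ge0; first exact: ltW.
  by rewrite subr_ge0 ltW.
have [c [/andP [Xc ct] Hc]] := ivt_gen _ _ _ 0 (@cont_aff (fun x => mu (Num.max x 0)) a b Dv X fc) (ltW Xt)
  (or_intror (introT andP (conj gt gX))).
have c0 : 0 < c by apply: lt_le_trans Xc.
have hac : 0 <= a - b * c.
  by rewrite subr_ge0 mulrC -ler_pdivlMr.
rewrite /= max_l // in Hc.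
have Xnc : X != c.
  apply/negP => /eqP Ec; move: Hc; rewrite -Ec subrr mulr0 subr0 => /eqP.
  by rewrite mulf_eq0 gt_eqF //= gt_eqF.
exists c; split.
  by rewrite ct andbT lt_neqAle Xnc.
apply: (mulfI (lt0r_neq0 c0)); rewrite /= [c * (Dv * _ / c)]mulrC divfK ?gt_eqF //.
by apply/eqP; rewrite -subr_eq0 Hc.
Qed.

Lemma pos_frac (x a k : R) (lam : \bar R) : 0 < k -> 0 < x ->
  x%:E = ((a%:E - lam) * k^-1%:E)%E -> (lam < a%:E)%E.
Proof.
move=> k0 x0; case: lam => [l| |] /=.
- rewrite -EFinB -EFinM => -[E]; rewrite lte_fin.
  by move: x0; rewrite E pmulr_lgt0 ?invr_gt0 // subr_gt0.
- by rewrite mulNyr gtr0_sg ?invr_gt0 // mul1e.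
- by move=> _; exact: ltNyr.
Qed.

Lemma pos_frac2 (x a c : R) (F : \bar R) : 0 < c -> 0 < x ->
  x%:E = (c%:E * (a%:E - F))%E -> (F < a%:E)%E.
Proof.
move=> c0 x0; case: F => [l| |] /=.
- rewrite -EFinB -EFinM => -[E]; rewrite lte_fin.
  by move: x0; rewrite E pmulr_rgt0 // subr_gt0.
- by rewrite mulrNy gtr0_sg // mul1e.
- by move=> _; exact: ltNyr.
Qed.

Lemma pos_frac3 (x k : R) (ph : \bar R) : 0 < k -> 0 < x ->
  x%:E = (ph * k^-1%:E)%E -> (0 < ph)%E.
Proof.
move=> k0 x0; case: ph => [l| |] /=.
- rewrite -EFinM => -[E]; rewrite lte_fin.
  by move: x0; rewrite E pmulr_lgt0 ?invr_gt0.
- by move=> _; exact: ltry.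
- by rewrite mulNyr gtr0_sg ?invr_gt0 // mul1e.
Qed.

Lemma efrac (a l k : R) : ((a%:E - l%:E) * k^-1%:E)%E = ((a - l) / k)%:E.
Proof. by rewrite -EFinB -EFinM. Qed.

Lemma zp (a x : R) : 0 <= x -> a * x = 0 -> x = 0 \/ (0 < x /\ a = 0).
Proof.
rewrite le_eqVlt => /orP [/eqP <-|h] E; first by left.
right; split => //; move/eqP: E; rewrite mulf_eq0 => /orP [/eqP //|].
by rewrite gt_eqF.
Qed.

Lemma solve_div (m Dv x y : R) : 0 < y -> Dv * (x - y) + m * y = 0 ->
  m = Dv * (y - x) / y.
Proof.
move=> y0 e; apply: (mulIf (lt0r_neq0 y0)); rewrite /= divfK ?lt0r_neq0 //.
lra.
Qed.

Lemma noz (m Dv x : R) : 0 < Dv -> 0 < x -> Dv * (x - 0) + m * 0 = 0 -> False.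
Proof.
move=> hD hx; rewrite subr0 mulr0 addr0 => /eqP; rewrite mulf_eq0.
by rewrite !gt_eqF.
Qed.

Lemma arg_eq (a l k : R) : 0 < k -> a - k * ((a - l) / k) = l.
Proof. by move=> k0; rewrite [k * _]mulrC divfK ?lt0r_neq0 //; lra. Qed.

Lemma eqsol (Dv m x c : R) : 0 < c -> m = Dv * (c - x) / c ->
  Dv * (x - c) + m * c = 0.
Proof. by move=> c0 ->; rewrite divfK ?lt0r_neq0 //; lra. Qed.

Lemma lt_inf_of_pos (a : R) (lam : \bar R) : (0 < a%:E - lam)%E -> (lam < +oo)%E.
Proof. by case: lam => [l| |] //= _; exact: ltry. Qed.

Lemma frac_le (a b k : R) : 0 < k -> a <= b -> a / k <= b / k.
Proof. by move=> k0 ab; rewrite ler_pM2r ?invr_gt0. Qed.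

Lemma frac_lt (a b k : R) : 0 < k -> a < b -> a / k < b / k.
Proof. by move=> k0 ab; rewrite ltr_pM2r ?invr_gt0. Qed.

Lemma frac_gt0 (a k : R) : 0 < k -> 0 < a -> 0 < a / k.
Proof. by move=> k0 a0; rewrite divr_gt0. Qed.

End Gen.
Arguments locbound {R f df}.
Arguments fe_cont {R f df}.
Arguments isder {R f df s}.
Arguments mvt_pos {R f df a b}.
Arguments incr {R f df a b}.
Arguments decr {R f df a b}.
Arguments ivt_gen {R g a b v}.
Arguments cont_aff {R h} a b c d.
Arguments root_aff {R mu a b Dv X}.
Arguments g_strict {R Dv X x y}.
Arguments pos_frac {R x a k lam}.
Arguments zp {R a x}.
Arguments lt_inf_of_pos {R a lam}.
Arguments arg_eq {R a l k}.
Arguments eqsol {R Dv m x c}.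
Arguments frac_le {R a b k}.
Arguments frac_lt {R a b k}.
Arguments frac_gt0 {R a k}.
Arguments solve_div {R m Dv x y}.
Arguments noz {R m Dv x}.
Arguments pos_frac2 {R x a c F}.
Arguments pos_frac3 {R x k ph}.

Section Model.
Variables (R : realType) (p : model R) (dmu1 dmu2 : R -> R).
Hypotheses (hk1 : 0 < k1 p) (hk2 : 0 < k2 p) (hk3 : 0 < k3 p) (hD : 0 < D p)
  (hr : 0 < r p < 1) (hS1 : 0 <= S1in p) (hS2 : 0 <= S2in p)
  (HH1 : H1 p dmu1) (HH2 : H2 p dmu2).

Lemma rr_pos i : 0 < rr p i.
Proof. by case: i => /=; move/andP: hr => [h1 h2]; rewrite ?subr_gt0. Qed.

Lemma Dd_pos i : 0 < Dd p i.
Proof. by rewrite /Dd divr_gt0 // rr_pos. Qed.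

Let C1m1 : C1_Rplus_with_deriv (mu1 p) dmu1. Proof. by case: HH1. Qed.
Let C1m2 : C1_Rplus_with_deriv (mu2 p) dmu2. Proof. by case: HH2. Qed.
Let m10 : mu1 p 0 = 0. Proof. by case: HH1 => _ []. Qed.
Let m20 : mu2 p 0 = 0. Proof. by case: HH2 => _ []. Qed.
Let m1lim : mu1 p x @[x --> +oo] --> m1 p. Proof. by case: HH1 => _ [_ []]. Qed.
Let m2lim : mu2 p x @[x --> +oo] --> 0. Proof. by case: HH2 => _ [_ []]. Qed.
Let dm1 : forall s, 0 < s -> 0 < dmu1 s. Proof. by case: HH1 => _ [_ []]. Qed.
Let S2m0 : 0 < S2m p. Proof. by case: HH2 => _ [_ [_ []]]. Qed.
Let dm2a : forall s, 0 < s < S2m p -> 0 < dmu2 s.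
Proof. by case: HH2 => _ [_ [_ [_ []]]]. Qed.
Let dm2b : forall s, S2m p < s -> dmu2 s < 0.
Proof. by case: HH2 => _ [_ [_ [_ []]]]. Qed.

Lemma mu1_incr {a b} : 0 <= a -> a < b -> mu1 p a < mu1 p b.
Proof.
move=> a0 ab; apply: (incr C1m1 a0 ab) => x /andP [h1 _]; apply: dm1.
exact: le_lt_trans h1.
Qed.

Lemma mu1_le {a b} : 0 <= a -> a <= b -> mu1 p a <= mu1 p b.
Proof.
move=> a0; rewrite le_eqVlt => /orP [/eqP -> //|ab].
exact/ltW/mu1_incr.
Qed.

Lemma mu1_ge0 {s} : 0 <= s -> 0 <= mu1 p s.
Proof. by move=> s0; rewrite -m10; apply: mu1_le. Qed.

Lemma mu1_ltm {s} : 0 <= s -> mu1 p s < m1 p.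
Proof.
move=> s0; have h : mu1 p s < mu1 p (s + 1).
  by apply: mu1_incr => //; rewrite ltrDl.
apply: (lt_le_trans h); rewrite leNgt; apply/negP => hc.
have := m1lim; move/cvgrPdist_lt/(_ (mu1 p (s + 1) - m1 p)).
rewrite subr_gt0 => /(_ hc) H.
have [M hM HM] := pinfty_ex_gt (m := s + 1) (num_real _) H.
have := mu1_incr (addr_ge0 s0 ler01) hM.
move: HM; rewrite ltr_norml => /andP [h1 h2] h3; lra.
Qed.

Lemma mu1_big {v} : v < m1 p -> exists T, 0 <= T /\ v < mu1 p T.
Proof.
move=> hv.
have := m1lim; move/cvgrPdist_lt/(_ (m1 p - v)).
rewrite subr_gt0 => /(_ hv) H.
have [M hM HM] := pinfty_ex_gt (m := 0) (num_real _) H.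
exists M; split; first exact: ltW.
move: HM; rewrite ltr_norml => /andP [h1 h2]; lra.
Qed.

Lemma mu2_incr {a b} : 0 <= a -> a < b -> b <= S2m p -> mu2 p a < mu2 p b.
Proof.
move=> a0 ab bS; apply: (incr C1m2 a0 ab) => x /andP [h1 h2]; apply: dm2a.
by rewrite (le_lt_trans a0 h1) (lt_le_trans h2 bS).
Qed.

Lemma mu2_decr {a b} : S2m p <= a -> a < b -> mu2 p b < mu2 p a.
Proof.
move=> aS ab; apply: (decr C1m2 (ltW (lt_le_trans S2m0 aS)) ab).
move=> x /andP [h1 _]; apply: dm2b; exact: le_lt_trans h1.
Qed.

Lemma mu2_lemax {s} : 0 <= s -> mu2 p s <= mu2 p (S2m p).
Proof.
move=> s0; case: (ltgtP s (S2m p)) => h.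
- exact/ltW/mu2_incr.
- exact/ltW/mu2_decr.
- by rewrite h.
Qed.

Lemma mu2_ge0_after {s} : S2m p <= s -> 0 <= mu2 p s.
Proof.
move=> sS; rewrite leNgt; apply/negP => hc.
have := m2lim; move/cvgrPdist_lt/(_ (- mu2 p s)).
rewrite oppr_gt0 => /(_ hc) H.
have [M hM HM] := pinfty_ex_gt (m := s) (num_real _) H.
have := mu2_decr sS hM.
move: HM; rewrite sub0r normrN ltr_norml => /andP [h1 h2] h3; lra.
Qed.

Lemma mu2_pos {s} : 0 < s -> 0 < mu2 p s.
Proof.
move=> s0; case: (lerP s (S2m p)) => h.
  by rewrite -m20; apply: mu2_incr.
have h1 : mu2 p (s + 1) < mu2 p s by apply: mu2_decr; rewrite ?ltW // ltrDl.
apply: le_lt_trans h1; apply: mu2_ge0_after.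
by rewrite ltW // (lt_le_trans h) // lerDl.
Qed.

Lemma mu2_small {v} : 0 < v -> exists T, S2m p <= T /\ mu2 p T < v.
Proof.
move=> hv.
have := m2lim; move/cvgrPdist_lt/(_ v hv) => H.
have [M hM HM] := pinfty_ex_gt (m := S2m p) (num_real _) H.
exists M; split; first exact: ltW.
move: HM; rewrite sub0r normrN ltr_norml => /andP [h1 h2]; lra.
Qed.

Let fe1c : continuous (fun x : R => mu1 p (Num.max x 0)) := fe_cont C1m1.
Let fe2c : continuous (fun x : R => mu2 p (Num.max x 0)) := fe_cont C1m2.

Lemma lam1_spec i :
  (lambda1 p i = +oo%E /\ forall s, 0 <= s -> mu1 p s <> Dd p i) \/
  exists l, lambda1 p i = l%:E /\ 0 < l /\ mu1 p l = Dd p i /\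
    forall s, 0 <= s -> mu1 p s = Dd p i -> s = l.
Proof.
rewrite /lambda1; case: ifP => h; last first.
  left; split => // s s0 E.
  have := mu1_ltm s0; rewrite E /Dd ltr_pdivrMr ?rr_pos // mulrC => h'.
  by rewrite h' in h.
right.
have hv : Dd p i < m1 p by rewrite /Dd ltr_pdivrMr ?rr_pos // mulrC.
have [T [T0 HT]] := mu1_big hv.
have hb : mu1 p (Num.max 0 0) <= Dd p i <= mu1 p (Num.max T 0).
  by rewrite max_l ?lexx // m10 ltW ?Dd_pos //= max_l // ltW.
have [c [/andP [c0 cT] Hc]] := ivt_gen fe1c T0 (or_introl hb).
rewrite /= max_l // in Hc.
have uniq : forall s, 0 <= s -> mu1 p s = Dd p i -> s = c.
  move=> s s0 Es; case: (ltgtP s c) => // hsc;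
    [have := mu1_incr s0 hsc | have := mu1_incr c0 hsc];
    by rewrite Es Hc ltxx.
exists c; split.
  congr EFin; apply: xget_unique; first by split.
  by move=> y [y0 Ey]; apply: uniq.
split; last by split.
rewrite lt_neqAle c0 andbT; apply/eqP => c0'.
by move: Hc; rewrite -c0' m10 => /esym/eqP; rewrite gt_eqF ?Dd_pos.
Qed.

Lemma lam2_spec i :
  (lambda2 p i b1 = +oo%E /\ lambda2 p i b2 = +oo%E /\
     forall s, 0 <= s -> mu2 p s <> Dd p i) \/
  exists l1 l2, lambda2 p i b1 = l1%:E /\ lambda2 p i b2 = l2%:E /\
    0 < l1 /\ 0 < l2 /\ mu2 p l1 = Dd p i /\ mu2 p l2 = Dd p i /\
    forall s, 0 <= s -> mu2 p s = Dd p i -> s = l1 \/ s = l2.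
Proof.
rewrite /lambda2; case: ifP => h; last first.
  left; split; [done|split; [done|]] => s s0 E.
  have := mu2_lemax s0; rewrite E /Dd ler_pdivrMr ?rr_pos // mulrC => h'.
  by rewrite /Dm h' in h.
right => /=.
have hv : Dd p i <= mu2 p (S2m p).
  by rewrite /Dd ler_pdivrMr ?rr_pos // mulrC.
have hb1 : mu2 p (Num.max 0 0) <= Dd p i <= mu2 p (Num.max (S2m p) 0).
  by rewrite max_l ?lexx // m20 ltW ?Dd_pos //= max_l // ltW.
have [c1 [/andP [c10 c1S] Hc1]] := ivt_gen fe2c (ltW S2m0) (or_introl hb1).
rewrite /= max_l // in Hc1.
have [T [TS HT]] := mu2_small (Dd_pos i).
have T0 : 0 <= T by apply: le_trans TS; exact: ltW.
have hb2 : mu2 p (Num.max T 0) <= Dd p i <= mu2 p (Num.max (S2m p) 0).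
  by rewrite max_l // ltW //= max_l // ltW.
have [c2 [/andP [c2S c2T] Hc2]] := ivt_gen fe2c TS (or_intror hb2).
have c20 : 0 < c2 by apply: lt_le_trans c2S.
rewrite /= max_l ?ltW // in Hc2.
have uniq : forall s, 0 <= s -> mu2 p s = Dd p i -> s = c1 \/ s = c2.
  move=> s s0 Es; case: (lerP s (S2m p)) => hs.
    left; case: (ltgtP s c1) => // hsc;
      [have := mu2_incr s0 hsc c1S | have := mu2_incr c10 hsc hs];
      by rewrite Es Hc1 ltxx.
  right; case: (ltgtP s c2) => // hsc;
    [have := mu2_decr (ltW hs) hsc | have := mu2_decr c2S hsc];
    by rewrite Es Hc2 ltxx.
have c12 : c1 <= c2 := le_trans c1S c2S.
have c1p : 0 < c1.
  rewrite lt_neqAle c10 andbT; apply/eqP => c0'.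
  by move: Hc1; rewrite -c0' m20 => /esym/eqP; rewrite gt_eqF ?Dd_pos.
exists c1, c2; split.
  congr EFin; apply: xget_unique.
    split => //; split => // T1 T10 ET.
    by have [->|->] := uniq T1 T10 ET; rewrite ?lexx.
  move=> y [y0 [Ey Hy]]; have [//|yc2] := uniq y y0 Ey.
  have := Hy c1 c10 Hc1; rewrite yc2 => h2.
  by apply/eqP; rewrite eq_le h2 c12.
split.
  congr EFin; apply: xget_unique.
    split; first exact: ltW.
    split => // T1 T10 ET.
    by have [->|->] := uniq T1 T10 ET; rewrite ?lexx.
  move=> y [y0 [Ey Hy]]; have [yc1|//] := uniq y y0 Ey.
  have := Hy c2 (ltW c20) Hc2; rewrite yc1 => h2.
  by apply/eqP; rewrite eq_le c12 h2.
by do 4!split => //.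
Qed.

Lemma sub_ge0_top {a b x : R} : 0 < b -> x <= a / b -> 0 <= a - b * x.
Proof. by move=> hb hx; rewrite subr_ge0 mulrC -ler_pdivlMr. Qed.

Lemma x12_spec : (lambda1 p b1 < (S1in p)%:E)%E ->
  exists l, lambda1 p b1 = l%:E /\ 0 < l /\ l < S1in p /\ mu1 p l = Dd p b1 /\
   X11star p = (S1in p - l) / k1 p /\ 0 < X11star p /\
   X11star p < X12star p /\ X12star p <= S1in p / k1 p /\
   mu1 p (S1in p - k1 p * X12star p) =
     Dd p b2 * (X12star p - X11star p) / X12star p /\
   (forall x, 0 < x <= S1in p / k1 p ->
      mu1 p (S1in p - k1 p * x) = Dd p b2 * (x - X11star p) / x ->
      x = X12star p).
Proof.
move=> hl.
have [[E _]|[l [El [l0 [Hl _]]]]] := lam1_spec b1.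
  by rewrite E in hl.
have hl' := hl; rewrite El lte_fin in hl'.
have XE : X11star p = (S1in p - l) / k1 p by rewrite /X11star El.
have X0 : 0 < X11star p by rewrite XE divr_gt0 // subr_gt0.
have Xt : X11star p < S1in p / k1 p.
  by rewrite XE ltr_pM2r ?invr_gt0 //; lra.
have eX : S1in p - k1 p * X11star p = l.
  by rewrite XE [k1 p * _]mulrC divfK ?gt_eqF //; lra.
have hm : 0 < mu1 p (S1in p - k1 p * X11star p) by rewrite eX Hl Dd_pos.
have [c [/andP [Xc ct] Hc]] := root_aff fe1c hk1 X0 Xt (Dd_pos b2) hm m10.
have c0 : 0 < c by apply: lt_trans Xc.
have uniq : forall x, 0 < x <= S1in p / k1 p ->
    mu1 p (S1in p - k1 p * x) = Dd p b2 * (x - X11star p) / x -> x = c.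
  move=> x /andP [x0 xt] Ex; case: (ltgtP x c) => // hxc.
    have h1 := g_strict (Dd_pos b2) X0 x0 hxc.
    have h2 : mu1 p (S1in p - k1 p * c) < mu1 p (S1in p - k1 p * x).
      by apply: mu1_incr; [exact: sub_ge0_top | rewrite ltrD2l ltrN2 ltr_pM2l].
    by move: h1; rewrite -Ex -Hc ltNge ltW.
  have h1 := g_strict (Dd_pos b2) X0 c0 hxc.
  have h2 : mu1 p (S1in p - k1 p * x) < mu1 p (S1in p - k1 p * c).
    by apply: mu1_incr; [exact: sub_ge0_top | rewrite ltrD2l ltrN2 ltr_pM2l].
  by move: h1; rewrite -Ex -Hc ltNge ltW.
have XS : X12star p = c.
  apply: xget_unique; first by split => //; rewrite c0 ct.
  by move=> y [hy Ey]; apply: uniq.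
exists l; rewrite XS; do 9!(split => //).
Qed.

Lemma lam1_hit {i s} : 0 <= s -> mu1 p s = Dd p i -> lambda1 p i = s%:E.
Proof.
move=> s0 Es; have [[_ H]|[l [El [_ [_ U]]]]] := lam1_spec i.
  by case: (H s s0 Es).
by rewrite El (U s s0 Es).
Qed.

Lemma lam1_fin {i} : (lambda1 p i < +oo)%E ->
  exists l, lambda1 p i = l%:E /\ 0 < l /\ mu1 p l = Dd p i.
Proof.
have [[E _]|[l [El [l0 [Hl _]]]]] := lam1_spec i; first by rewrite E.
by move=> _; exists l.
Qed.

Lemma lam2_hit {i s} : 0 <= s -> mu2 p s = Dd p i ->
  exists j, lambda2 p i j = s%:E.
Proof.
move=> s0 Es; have [[_ [_ H]]|[l1 [l2 [E1 [E2 [_ [_ [_ [_ U]]]]]]]]] := lam2_spec i.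
  by case: (H s s0 Es).
by case: (U s s0 Es) => ->; [exists b1 | exists b2].
Qed.

Lemma lam2_fin {i j} : (lambda2 p i j < +oo)%E ->
  exists l, lambda2 p i j = l%:E /\ 0 < l /\ mu2 p l = Dd p i.
Proof.
have [[E1 [E2 _]]|[l1 [l2 [E1 [E2 [h1 [h2 [m1 [m2 _]]]]]]]]] := lam2_spec i.
  by case: j; rewrite ?E1 ?E2.
by case: j => _; [exists l1 | exists l2]; rewrite ?E1 ?E2.
Qed.

Lemma F_fin {i j a b} : lambda1 p i = a%:E -> lambda2 p i j = b%:E ->
  F p i j = (a + k1 p / k2 p * (b - S2in p))%:E.
Proof. by move=> Ea Eb; rewrite /F Ea Eb -EFinB -EFinM -EFinD. Qed.

Lemma ck : 0 < k2 p / (k1 p * k3 p).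
Proof. by rewrite divr_gt0 // mulr_gt0. Qed.

Lemma type_cond t x1 x2 x3 x4 : is_type p t x1 x2 x3 x4 -> cond p t.
Proof.
case: t => [|i||i||i|i|i|i] /=.
- by [].
- by move=> [_ [_ [_ [h E]]]]; exact: pos_frac hk3 h E.
- by move=> [_ [_ [h [_ E]]]]; exact: pos_frac hk1 h E.
- move=> [_ [_ [h3 [h4 [E3 E4]]]]]; rewrite gt_max.
  by rewrite (pos_frac hk1 h3 E3) (pos_frac2 ck h4 E4).
- by move=> [h [_ [_ [_ [E _]]]]]; exact: pos_frac hk1 h E.
- move=> [h [_ [_ [h4 [E [_ E4]]]]]]; split; first exact: pos_frac hk1 h E.
  exact: pos_frac3 hk3 h4 E4.
- by move=> [_ [h [_ [_ [E _]]]]]; exact: pos_frac hk3 h E.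
- move=> [_ [h2 [h3 [_ [E2 [E3 _]]]]]]; split; first exact: pos_frac hk1 h3 E3.
  exact: pos_frac hk3 h2 E2.
- move=> [h1 [h2 [_ [_ [E1 [E2 _]]]]]]; rewrite gt_max.
  by rewrite (pos_frac hk1 h1 E1) (pos_frac2 ck h2 E2).
Qed.

Lemma classify x1 x2 x3 x4 : steady p x1 x2 x3 x4 ->
  exists t, is_type p t x1 x2 x3 x4.
Proof.
move=> [[/andP [x1ge x1le] [/andP [x3ge x3le] [/andP [x2ge x2le] /andP [x4ge x4le]]]]
  [e1 [e2 [e3 e4]]]].
have a1 := sub_ge0_top hk1 x1le.
have a3 := sub_ge0_top hk1 x3le.
have a2 := sub_ge0_top hk3 x2le.
have a4 := sub_ge0_top hk3 x4le.
have k1n := lt0r_neq0 hk1; have k2n := lt0r_neq0 hk2; have k3n := lt0r_neq0 hk3.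
have [x10|[x1p m1e]] := zp x1ge e1.
  subst x1.
  have e3' : (mu1 p (S1in p - k1 p * x3) - Dd p b2) * x3 = 0.
    by move: e3; rewrite sub0r; lra.
  have [x30|[x3p m3e]] := zp x3ge e3'.
    subst x3; have [x20|[x2p m2e]] := zp x2ge e2.
      subst x2.
      have e4' : (mu2 p (S2in p + k2 p * 0 - k3 p * x4) - Dd p b2) * x4 = 0.
        by move: e4; rewrite sub0r; lra.
      have [x40|[x4p m4e]] := zp x4ge e4'.
        by subst x4; exists E00_00.
      have [j Ej] := lam2_hit a4 (subr0_eq m4e).
      exists (E00_0 j) => /=; do 4!split => //.
      by rewrite Ej efrac; congr EFin; field; rewrite ?k1n ?k2n ?k3n.
    have [j Ej] := lam2_hit a2 (subr0_eq m2e).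
    have [x40|x4p] : x4 = 0 \/ 0 < x4.
      by move: x4ge; rewrite le_eqVlt => /orP [/eqP <-|]; [left|right].
      by subst x4; case: (noz (Dd_pos b2) x2p e4).
    exists (E0_01 j) => /=; do 4!split => //.
    split; first by rewrite Ej efrac; congr EFin; field; rewrite ?k1n ?k2n ?k3n.
    move: x4le e4; rewrite mulr0 addr0 => x4le e4; split => //.
    by rewrite (solve_div x4p e4).
  have E3 := lam1_hit a3 (subr0_eq m3e).
  have [x20|[x2p m2e]] := zp x2ge e2.
    subst x2.
    have e4' : (mu2 p (S2in p + k2 p * x3 - k3 p * x4) - Dd p b2) * x4 = 0.
      by move: e4; rewrite sub0r; lra.
    have [x40|[x4p m4e]] := zp x4ge e4'.
      subst x4; exists E00_10 => /=; do 4!split => //.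
      by rewrite E3 efrac; congr EFin; field; rewrite ?k1n ?k2n ?k3n.
    have [j Ej] := lam2_hit a4 (subr0_eq m4e).
    exists (E00_1 j) => /=; do 4!split => //.
    split; first by rewrite E3 efrac; congr EFin; field; rewrite ?k1n ?k2n ?k3n.
    by rewrite (F_fin E3 Ej) -EFinB -EFinM; congr EFin; field; rewrite ?k1n ?k2n ?k3n.
  have [j Ej] := lam2_hit a2 (subr0_eq m2e).
  have [x40|x4p] : x4 = 0 \/ 0 < x4.
    by move: x4ge; rewrite le_eqVlt => /orP [/eqP <-|]; [left|right].
    by subst x4; case: (noz (Dd_pos b2) x2p e4).
  exists (E0_11 j) => /=; do 4!split => //.
  split; first by rewrite Ej efrac; congr EFin; field; rewrite ?k1n ?k2n ?k3n.
  split; first by rewrite E3 efrac; congr EFin; field; rewrite ?k1n ?k2n ?k3n.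
  split => //.
  by rewrite (solve_div x4p e4).
have E1 := lam1_hit a1 (subr0_eq m1e).
have hl : (lambda1 p b1 < (S1in p)%:E)%E.
  by rewrite E1 lte_fin; have := mulr_gt0 hk1 x1p; lra.
have [l [El [l0 [lS [Hl [XE [X0 [XX [Xt [XH U]]]]]]]]]] := x12_spec hl.
have lE : l = S1in p - k1 p * x1 by move: El; rewrite E1 => -[].
have x1E : x1 = X11star p by rewrite XE lE; field; rewrite ?k1n ?k2n ?k3n.
have [x30|x3p] : x3 = 0 \/ 0 < x3.
  by move: x3ge; rewrite le_eqVlt => /orP [/eqP <-|]; [left|right].
  by subst x3; case: (noz (Dd_pos b2) x1p e3).
have x3E : x3 = X12star p.
  apply: U; first by rewrite x3p.
  by rewrite (solve_div x3p e3) x1E.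
have [x20|[x2p m2e]] := zp x2ge e2.
  subst x2.
  have e4' : (mu2 p (S2in p + k2 p * x3 - k3 p * x4) - Dd p b2) * x4 = 0.
    by move: e4; rewrite sub0r; lra.
  have [x40|[x4p m4e]] := zp x4ge e4'.
    subst x4; exists E10_10 => /=; do 4!split => //.
    by split => //; rewrite E1 efrac; congr EFin; field; rewrite ?k1n ?k2n ?k3n.
  have [j Ej] := lam2_hit a4 (subr0_eq m4e).
  exists (E10_1 j) => /=; do 4!split => //.
  split; first by rewrite E1 efrac; congr EFin; field; rewrite ?k1n ?k2n ?k3n.
  split => //.
  by rewrite /phi Ej -x3E -EFinB -EFinM; congr EFin; field; rewrite ?k1n ?k2n ?k3n.
have [j Ej] := lam2_hit a2 (subr0_eq m2e).
have [x40|x4p] : x4 = 0 \/ 0 < x4.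
  by move: x4ge; rewrite le_eqVlt => /orP [/eqP <-|]; [left|right].
  by subst x4; case: (noz (Dd_pos b2) x2p e4).
exists (E1_11 j) => /=; do 4!split => //.
split; first by rewrite E1 efrac; congr EFin; field; rewrite ?k1n ?k2n ?k3n.
split; first by rewrite (F_fin E1 Ej) -EFinB -EFinM; congr EFin; field; rewrite ?k1n ?k2n ?k3n.
do 2!split => //.
by rewrite (solve_div x4p e4).
Qed.

Lemma lam2_ltF {i j a} (x : R) : lambda1 p i = a%:E -> (F p i j < x%:E)%E ->
  (lambda2 p i j < +oo)%E.
Proof.
move=> Ea; case E: (lambda2 p i j) => [l| |].
- by move=> _; exact: ltry.
- rewrite /F Ea E /= mulry gtr0_sg ?mul1e //.
  by rewrite divr_gt0.
- by move=> _; exact: ltNye.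
Qed.

Let T1 : 0 <= S1in p / k1 p.
Proof. by rewrite divr_ge0 // ltW. Qed.
Let T2 x : 0 <= x -> 0 <= (S2in p + k2 p * x) / k3 p.
Proof. by move=> x0; rewrite divr_ge0 ?addr_ge0 ?mulr_ge0 // ltW. Qed.

Lemma mkinM x1 x2 x3 x4 : 0 <= x1 -> x1 <= S1in p / k1 p ->
  0 <= x3 -> x3 <= S1in p / k1 p ->
  0 <= x2 -> x2 <= (S2in p + k2 p * x1) / k3 p ->
  0 <= x4 -> x4 <= (S2in p + k2 p * x3) / k3 p -> inM p x1 x2 x3 x4.
Proof. by move=> *; split; [|split; [|split]]; apply/andP; split. Qed.

Lemma ex_00_00 : exists x1 x2 x3 x4, steady p x1 x2 x3 x4 /\
  is_type p E00_00 x1 x2 x3 x4.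
Proof.
exists 0, 0, 0, 0; split => //.
split; first by apply: mkinM => //; apply: T2.
by rewrite !subrr !mulr0 !addr0.
Qed.

Lemma ex_00_0 i : cond p (E00_0 i) -> exists x1 x2 x3 x4,
  steady p x1 x2 x3 x4 /\ is_type p (E00_0 i) x1 x2 x3 x4.
Proof.
rewrite /= => c.
have [l [El [l0 Hl]]] := lam2_fin (lt_trans c (ltry _)).
rewrite El lte_fin in c.
have x4p : 0 < (S2in p - l) / k3 p by apply: frac_gt0; rewrite ?subr_gt0.
exists 0, 0, 0, ((S2in p - l) / k3 p); split; last first.
  by do 4!split => //; rewrite El efrac.
split.
  apply: mkinM => //; try (by apply: T2); try (by apply: T2; apply: ltW); try by apply: ltW.
  by rewrite mulr0 addr0; apply: frac_le => //; lra.
rewrite ?subrr ?mulr0 ?addr0 ?subr0 ?mul0r arg_eq // Hl.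
by do 3!split => //; lra.
Qed.

Lemma ex_00_10 : cond p E00_10 -> exists x1 x2 x3 x4,
  steady p x1 x2 x3 x4 /\ is_type p E00_10 x1 x2 x3 x4.
Proof.
rewrite /= => c.
have [l [El [l0 Hl]]] := lam1_fin (lt_trans c (ltry _)).
rewrite El lte_fin in c.
have x3p : 0 < (S1in p - l) / k1 p by apply: frac_gt0; rewrite ?subr_gt0.
exists 0, 0, ((S1in p - l) / k1 p), 0; split; last first.
  by do 4!split => //; rewrite El efrac.
split.
  apply: mkinM => //; try (by apply: T2); try (by apply: T2; apply: ltW); try by apply: ltW.
  by apply: frac_le => //; lra.
rewrite ?subrr ?mulr0 ?addr0 ?subr0 ?mul0r arg_eq // Hl.
by do 3!split => //; lra.
Qed.

Ltac inm := apply: mkinM => //; try (by apply: T2); try (by apply: T2; apply: ltW);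
  try by apply: ltW.

Lemma ex_00_1 i : cond p (E00_1 i) -> exists x1 x2 x3 x4,
  steady p x1 x2 x3 x4 /\ is_type p (E00_1 i) x1 x2 x3 x4.
Proof.
have k1n := lt0r_neq0 hk1; have k2n := lt0r_neq0 hk2; have k3n := lt0r_neq0 hk3.
rewrite /= gt_max => /andP [c1 c2].
have [l1 [E1 [l10 H1]]] := lam1_fin (lt_trans c1 (ltry _)).
have [l2 [E2 [l20 H2]]] := lam2_fin (lam2_ltF _ E1 c2).
rewrite (F_fin E1 E2) lte_fin in c2.
rewrite E1 lte_fin in c1.
set x3 := (S1in p - l1) / k1 p.
set x4 := (S2in p + k2 p * x3 - l2) / k3 p.
have x3p : 0 < x3 by apply: frac_gt0; rewrite ?subr_gt0.
have x4E : x4 = k2 p / (k1 p * k3 p) *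
   (S1in p - (l1 + k1 p / k2 p * (l2 - S2in p))).
  by rewrite /x4 /x3; field; rewrite ?k1n ?k2n ?k3n.
have x4p : 0 < x4 by rewrite x4E mulr_gt0 ?ck // subr_gt0.
exists 0, 0, x3, x4; split; last first.
  do 4!split => //; split; first by rewrite E1 efrac.
  by rewrite (F_fin E1 E2) -EFinB -EFinM x4E.
split.
  inm; first by apply: frac_le => //; lra.
  by apply: frac_le => //; lra.
rewrite ?subrr ?mulr0 ?addr0 ?subr0 ?mul0r ?sub0r /x4 /x3 !arg_eq // H1 H2.
by do 3!split => //; lra.
Qed.

Lemma ex_10_10 : cond p E10_10 -> exists x1 x2 x3 x4,
  steady p x1 x2 x3 x4 /\ is_type p E10_10 x1 x2 x3 x4.
Proof.
rewrite /= => c.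
have [l [El [l0 [lS [Hl [XE [X0 [XX [Xt [XH U]]]]]]]]]] := x12_spec c.
have X2p : 0 < X12star p by apply: lt_trans XX.
exists (X11star p), 0, (X12star p), 0; split; last first.
  by do 4!split => //; split => //; rewrite El efrac XE.
split.
  by inm; apply: ltW; apply: lt_le_trans XX Xt.
rewrite ?subrr ?mulr0 ?addr0 ?subr0 ?mul0r ?sub0r.
rewrite XE arg_eq // Hl subrr mul0r -XE.
do 3!split => //.
by apply: eqsol.
Qed.

Lemma ex_10_1 i : cond p (E10_1 i) -> exists x1 x2 x3 x4,
  steady p x1 x2 x3 x4 /\ is_type p (E10_1 i) x1 x2 x3 x4.
Proof.
rewrite /= => -[c cphi].
have [l [El [l0 [lS [Hl [XE [X0 [XX [Xt [XH U]]]]]]]]]] := x12_spec c.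
have X2p : 0 < X12star p by apply: lt_trans XX.
have [l2 [E2 [l20 H2]]] := lam2_fin (lt_inf_of_pos cphi).
have cphi' := cphi; rewrite /phi E2 -EFinB lte_fin subr_gt0 in cphi'.
set x4 := (S2in p + k2 p * X12star p - l2) / k3 p.
have x4p : 0 < x4 by apply: frac_gt0; rewrite ?subr_gt0.
exists (X11star p), 0, (X12star p), x4; split; last first.
  do 4!split => //; split; first by rewrite El efrac XE.
  by split => //; rewrite /phi E2 efrac.
split.
  inm; first by apply: ltW; apply: lt_le_trans XX Xt.
  by apply: frac_le => //; lra.
rewrite ?subrr ?mulr0 ?addr0 ?subr0 ?mul0r ?sub0r.
rewrite {1}XE arg_eq // Hl subrr mul0r /x4 arg_eq // H2.
do 3!split => //; last by lra.
by apply: eqsol.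
Qed.

Lemma ex_0_01 i : cond p (E0_01 i) -> exists x1 x2 x3 x4,
  steady p x1 x2 x3 x4 /\ is_type p (E0_01 i) x1 x2 x3 x4.
Proof.
rewrite /= => c.
have [l [E [l0 Hl]]] := lam2_fin (lt_trans c (ltry _)).
rewrite E lte_fin in c.
set x2 := (S2in p - l) / k3 p.
have x2p : 0 < x2 by apply: frac_gt0; rewrite ?subr_gt0.
have x2t : x2 < S2in p / k3 p by apply: frac_lt => //; lra.
have e2 : S2in p - k3 p * x2 = l by rewrite /x2 arg_eq.
have hm : 0 < mu2 p (S2in p - k3 p * x2) by rewrite e2 Hl Dd_pos.
have [c4 [/andP [xc ct] Hc]] := root_aff fe2c hk3 x2p x2t (Dd_pos b2) hm m20.
have c4p : 0 < c4 := lt_trans x2p xc.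
exists 0, x2, 0, c4; split; last first.
  do 4!split => //; split; first by rewrite E efrac.
  by split.
split.
  by inm; rewrite mulr0 addr0 //; exact: ltW.
rewrite ?subrr ?mulr0 ?addr0 ?subr0 ?mul0r e2 Hl subrr mul0r.
do 3!split => //.
by apply: eqsol.
Qed.

Lemma ex_0_11 i : cond p (E0_11 i) -> exists x1 x2 x3 x4,
  steady p x1 x2 x3 x4 /\ is_type p (E0_11 i) x1 x2 x3 x4.
Proof.
have k1n := lt0r_neq0 hk1; have k2n := lt0r_neq0 hk2; have k3n := lt0r_neq0 hk3.
rewrite /= => -[c1 c2].
have [l1 [E1 [l10 H1]]] := lam1_fin (lt_trans c1 (ltry _)).
have [l2 [E2 [l20 H2]]] := lam2_fin (lt_trans c2 (ltry _)).
rewrite E1 lte_fin in c1; rewrite E2 lte_fin in c2.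
set x3 := (S1in p - l1) / k1 p.
set x2 := (S2in p - l2) / k3 p.
have x3p : 0 < x3 by apply: frac_gt0; rewrite ?subr_gt0.
have x2p : 0 < x2 by apply: frac_gt0; rewrite ?subr_gt0.
have k2x3 := mulr_gt0 hk2 x3p.
have x2t : x2 < (S2in p + k2 p * x3) / k3 p by apply: frac_lt => //; lra.
have e2 : S2in p - k3 p * x2 = l2 by rewrite /x2 arg_eq.
have e3 : S1in p - k1 p * x3 = l1 by rewrite /x3 arg_eq.
have ea : S2in p + k2 p * x3 - k3 p * x2 = l2 + k2 p * x3.
  by rewrite /x2; field.
have hm : 0 < mu2 p (S2in p + k2 p * x3 - k3 p * x2).
  by rewrite ea; apply: mu2_pos; rewrite addr_gt0.
have [c4 [/andP [xc ct] Hc]] := root_aff fe2c hk3 x2p x2t (Dd_pos b2) hm m20.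
have c4p : 0 < c4 := lt_trans x2p xc.
exists 0, x2, x3, c4; split; last first.
  do 4!split => //; split; first by rewrite E2 efrac.
  split; first by rewrite E1 efrac.
  by split.
split.
  inm; first by apply: frac_le => //; lra.
  by rewrite mulr0 addr0; apply: frac_le => //; lra.
rewrite ?subrr ?mulr0 ?addr0 ?subr0 ?mul0r ?sub0r e2 H2 subrr mul0r e3 H1.
do 3!split => //; first by lra.
by apply: eqsol.
Qed.

Lemma ex_1_11 i : cond p (E1_11 i) -> exists x1 x2 x3 x4,
  steady p x1 x2 x3 x4 /\ is_type p (E1_11 i) x1 x2 x3 x4.
Proof.
have k1n := lt0r_neq0 hk1; have k2n := lt0r_neq0 hk2; have k3n := lt0r_neq0 hk3.
rewrite /= gt_max => /andP [c1 c2].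
have [l [El [l0 [lS [Hl [XE [X0 [XX [Xt [XH U]]]]]]]]]] := x12_spec c1.
have X2p : 0 < X12star p by apply: lt_trans XX.
have [l2 [E2 [l20 H2]]] := lam2_fin (lam2_ltF _ El c2).
rewrite (F_fin El E2) lte_fin in c2.
set x2 := (S2in p + k2 p * X11star p - l2) / k3 p.
have x2E : x2 = k2 p / (k1 p * k3 p) *
   (S1in p - (l + k1 p / k2 p * (l2 - S2in p))).
  by rewrite /x2 XE; field; rewrite ?k1n ?k2n ?k3n.
have x2p : 0 < x2 by rewrite x2E mulr_gt0 ?ck // subr_gt0.
have hX : 0 < k2 p * (X12star p - X11star p) by rewrite mulr_gt0 // subr_gt0.
have x2t : x2 < (S2in p + k2 p * X12star p) / k3 p.
  by apply: frac_lt => //; move: hX; rewrite mulrBr; lra.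
have e1 : S1in p - k1 p * X11star p = l by rewrite XE arg_eq.
have e2 : S2in p + k2 p * X11star p - k3 p * x2 = l2 by rewrite /x2 arg_eq.
have ea : S2in p + k2 p * X12star p - k3 p * x2 =
    l2 + k2 p * (X12star p - X11star p).
  by rewrite /x2; field.
have hm : 0 < mu2 p (S2in p + k2 p * X12star p - k3 p * x2).
  by rewrite ea; apply: mu2_pos; rewrite addr_gt0.
have [c4 [/andP [xc ct] Hc]] := root_aff fe2c hk3 x2p x2t (Dd_pos b2) hm m20.
have c4p : 0 < c4 := lt_trans x2p xc.
exists (X11star p), x2, (X12star p), c4; split; last first.
  do 4!split => //; split; first by rewrite El efrac XE.
  split; first by rewrite (F_fin El E2) -EFinB -EFinM x2E.
  by split.
split.
  inm; first by apply: ltW; apply: lt_le_trans XX Xt.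
  by apply: frac_le => //; lra.
rewrite e1 Hl subrr mul0r e2 H2 subrr mul0r.
do 3!split => //; by apply: eqsol.
Qed.

Lemma main_res :
  (forall x1 x2 x3 x4 : R, steady p x1 x2 x3 x4 ->
     exists t : sstype, is_type p t x1 x2 x3 x4)
  /\
  (forall t : sstype,
     (exists x1 x2 x3 x4 : R, steady p x1 x2 x3 x4 /\ is_type p t x1 x2 x3 x4)
     <-> cond p t).
Proof using hk1 hk2 hk3 hD hr hS1 hS2 HH1 HH2.
split; first exact: classify.
move=> t; split; first by move=> [x1 [x2 [x3 [x4 [_ T]]]]]; exact: type_cond T.
case: t => [|i||i||i|i|i|i].
- by move=> _; exact: ex_00_00.
- exact: ex_00_0.
- exact: ex_00_10.
- exact: ex_00_1.
- exact: ex_10_10.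
- exact: ex_10_1.
- exact: ex_0_01.
- exact: ex_0_11.
- exact: ex_1_11.
Qed.

End Model.

Theorem proposition3p1 (R : realType) (p : model R) (dmu1 dmu2 : R -> R) :
  0 < k1 p -> 0 < k2 p -> 0 < k3 p -> 0 < D p -> 0 < r p < 1 ->
  0 <= S1in p -> 0 <= S2in p ->
  H1 p dmu1 -> H2 p dmu2 ->
  (* every nonnegative steady state is of one of the nine types *)
  (forall x1 x2 x3 x4 : R, steady p x1 x2 x3 x4 ->
     exists t : sstype, is_type p t x1 x2 x3 x4)
  /\
  (* a steady state of type t exists iff the condition for t holds *)
  (forall t : sstype,
     (exists x1 x2 x3 x4 : R, steady p x1 x2 x3 x4 /\ is_type p t x1 x2 x3 x4)
     <-> cond p t).
Proof.
move=> hk1 hk2 hk3 hD hr hS1 hS2 HH1 HH2.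
exact: (@main_res R p dmu1 dmu2 hk1 hk2 hk3 hD hr hS1 hS2 HH1 HH2).
Qed.
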